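(* Let $G$ be a group with finite generating set $S$ that contains an element $g$ of infinite order in its center such that $G/\langle g\rangle$ is not a torsion group. Then there is a snake embedding from $(\mathbb{Z}^2,\{a,b\})$ into $(G,S\cup\{g\})$, where $\{a,b\}$ is the standard generating set of $\mathbb{Z}^2$.
   Context: A group is torsion if every element has finite order. An invertible-reversible transducer is a tuple $\mathcal M=(Q,S',T',q_0,\delta,\eta)$ with $Q$ a finite set of states, $q_0\in Q$, $\delta:Q\times S'\to Q$, $\eta:Q\times S'\to T'$ with $\eta(q,\cdot)$ injective for every $q$, and such that for all $q\in Q$, $s\in S'$ there is a unique $q'$ with $\delta(q',s)=q$. One extends by $\eta(q,s^{-1})=\eta(q',s)^{-1}$ and $\delta(q,s^{-1})=q'$ where $\delta(q',s)=q$. For a word $w$, $q_w$ is the state reached from $q_0$ after reading $w$, and $f_{\mathcal M}(\epsilon)=\epsilon$, $f_{\mathcal M}(ws^{\pm1})=f_{\mathcal M}(w)\eta(q_w,s^{\pm1})$. For groups $(K,S')$, $(H,T')$ with finite generating sets, a map $\phi:K\to H$ is a snake embedding if there is such a transducer with $\phi(k)=\overline{f_{\mathcal M}(w)}$ for every word $w$ over $S'\cup S'^{-1}$ representing $k$, and $f_{\mathcal M}(w)=_H f_{\mathcal M}(w')$ iff $w=_K w'$. *)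

(* Defs.v *)
From mathcomp Require Import all_boot all_order all_algebra.
From Stdlib Require List.
Set Implicit Arguments. Unset Strict Implicit. Unset Printing Implicit Defensive.
Import GRing.Theory.

Record group := Group {
  gcar :> Type;
  gmul : gcar -> gcar -> gcar;
  gone : gcar;
  ginv : gcar -> gcar;
  gmulA : forall x y z, gmul x (gmul y z) = gmul (gmul x y) z;
  gmul1 : forall x, gmul gone x = x;
  gmulV : forall x, gmul (ginv x) x = gone }.

Section GroupDefs.
Variable G : group.

Fixpoint gpow (x : G) (n : nat) : G :=
  if n is m.+1 then @gmul G x (gpow x m) else @gone G.

Definition gpowz (x : G) (z : int) : G :=
  match z with
  | Posz n => gpow x n
  | Negz n => gpow (@ginv G x) n.+1
  end.

(** Formal words over an alphabet [A] together with the inverse letters: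
    a letter is [(s, false)] for [s] and [(s, true)] for [s^-1]. *)
Definition letter_val (A : Type) (v : A -> G) (l : A * bool) : G :=
  if l.2 then @ginv G (v l.1) else v l.1.

Definition eval_word (A : Type) (v : A -> G) (w : seq (A * bool)) : G :=
  foldr (fun l acc => @gmul G (letter_val v l) acc) (@gone G) w.

Definition generates (S : seq G) : Prop :=
  forall x : G, exists w : seq (G * bool),
    (forall l, List.In l w -> List.In l.1 S) /\ eval_word id w = x.
End GroupDefs.

(** Invertible-reversible transducers with input alphabet [I] (a finite
    type, naming the generators of K) and outputs in the group H. *)
Section Transducer.
Variables (I Q : finType) (H : group).
Variables (q0 : Q) (delta : Q -> I -> Q) (eta : Q -> I -> H).

(** delta(q, s^-1) = the q' with delta(q', s) = q (unique under reversibility) *)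
Definition delta_inv (q : Q) (s : I) : Q := odflt q [pick q' | delta q' s == q].

Definition tstep (p : Q * seq (H * bool)) (l : I * bool) : Q * seq (H * bool) :=
  let: (q, out) := p in
  if l.2 then let q' := delta_inv q l.1 in (q', rcons out (eta q' l.1, true))
  else (delta q l.1, rcons out (eta q l.1, false)).

Definition f_M (w : seq (I * bool)) : seq (H * bool) := (foldl tstep (q0, [::]) w).2.
End Transducer.

Definition snake_embedding (K : group) (I : finType) (vK : I -> K)
    (H : group) (T : seq H) (phi : K -> H) : Prop :=
  exists (Q : finType) (q0 : Q) (delta : Q -> I -> Q) (eta : Q -> I -> H),
    [/\ (forall q s, List.In (eta q s) T),
        (forall q, injective (eta q)),
        (forall q s, exists! q', delta q' s = q),
        (forall w : seq (I * bool),
            phi (eval_word vK w) = eval_word id (f_M q0 delta eta w)) &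
        (forall w w' : seq (I * bool),
            eval_word id (f_M q0 delta eta w) = eval_word id (f_M q0 delta eta w')
            <-> eval_word vK w = eval_word vK w')].

Definition Z2add (x y : int * int) : int * int := (x.1 + y.1, x.2 + y.2)%R.
Definition Z2opp (x : int * int) : int * int := (- x.1, - x.2)%R.

Lemma Z2addA x y z : Z2add x (Z2add y z) = Z2add (Z2add x y) z.
Proof. by rewrite /Z2add /= !addrA. Qed.
Lemma Z2add0 x : Z2add (0, 0)%R x = x.
Proof. by case: x => a b; rewrite /Z2add /= !add0r. Qed.
Lemma Z2addN x : Z2add (Z2opp x) x = (0, 0)%R.
Proof. by rewrite /Z2add /Z2opp /= !addNr. Qed.

Definition Z2 : group := Group Z2addA Z2add0 Z2addN.

(** false = a, true = b *)
Definition Z2gen (s : bool) : Z2 := if s then (0, 1)%R else (1, 0)%R.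

(* Main.v *)
Require Import Defs.
From mathcomp Require Import all_boot all_order all_algebra.
From mathcomp Require Import zify.
From Stdlib Require Import Classical.
Set Implicit Arguments. Unset Strict Implicit. Unset Printing Implicit Defensive.
Import Order.TTheory GRing.Theory.

Section GroupLemmas.
Variable G : group.
Implicit Types x y z : G.
Local Notation "x ** y" := (@gmul G x y) (at level 40, left associativity).
Local Notation one := (@gone G).
Local Notation inv := (@ginv G).

Lemma gmulVr x : x ** inv x = one.
Proof.
have h : inv (inv x) ** inv x = one := gmulV _.
by rewrite -{1}(gmul1 (x ** inv x)) -{1}h -gmulA (gmulA (inv x)) gmulV gmul1 h.
Qed.
Lemma gmul1r x : x ** one = x.
Proof. by rewrite -(gmulV x) gmulA gmulVr gmul1. Qed.
Lemma gmulKl x y : inv x ** (x ** y) = y.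
Proof. by rewrite gmulA gmulV gmul1. Qed.
Lemma gmulKVl x y : x ** (inv x ** y) = y.
Proof. by rewrite gmulA gmulVr gmul1. Qed.
Lemma gmulKr x y : (x ** y) ** inv y = x.
Proof. by rewrite -gmulA gmulVr gmul1r. Qed.
Lemma gmulKVr x y : (x ** inv y) ** y = x.
Proof. by rewrite -gmulA gmulV gmul1r. Qed.
Lemma gmul_injl z x y : z ** x = z ** y -> x = y.
Proof. by move/(congr1 (@gmul G (inv z))); rewrite !gmulKl. Qed.
Lemma gmul_injr z x y : x ** z = y ** z -> x = y.
Proof. by move/(congr1 (fun t => t ** inv z)); rewrite !gmulKr. Qed.

Lemma gpowSr x n : gpow x n.+1 = gpow x n ** x.
Proof.
elim: n => [|n IH] /=; first by rewrite gmul1r gmul1.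
change (x ** gpow x n.+1 = (x ** gpow x n) ** x); by rewrite IH gmulA.
Qed.
Lemma gpowD x a b : gpow x (a + b) = gpow x a ** gpow x b.
Proof. elim: a => [|a IH] /=; first by rewrite gmul1. by rewrite IH gmulA. Qed.
Lemma gpowM x a b : gpow x (a * b) = gpow (gpow x a) b.
Proof. elim: b => [|b IH]; first by rewrite muln0. by rewrite mulnS gpowD IH. Qed.

Definition gcomm x y := x ** y = y ** x.
Lemma gpow_comm x y n : gcomm x y -> gcomm (gpow x n) y.
Proof.
rewrite /gcomm => h; elim: n => [|n IH] /=; first by rewrite gmul1 gmul1r.
by rewrite -gmulA IH !gmulA h.
Qed.
Lemma gpowMc x y n : gcomm x y -> gpow (x ** y) n = gpow x n ** gpow y n.
Proof.
move=> h; elim: n => [|n IH] /=; first by rewrite gmul1r.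
have h' := gpow_comm n h.
by rewrite IH -!gmulA (gmulA y) -h' !gmulA.
Qed.
Lemma inv_comm x y : gcomm x y -> gcomm (inv x) y.
Proof.
rewrite /gcomm => h; apply: (@gmul_injr x).
by rewrite gmulKVr -gmulA -h gmulKl.
Qed.
Lemma gpowVK x n : gpow (inv x) n ** gpow x n = one.
Proof.
elim: n => [|n IH]; first by rewrite /= gmul1r.
by rewrite [gpow x n.+1]gpowSr /= -!gmulA (gmulA (gpow (inv x) n)) IH gmul1 gmulV.
Qed.
Lemma gpow_conj A B n : A ** gpow (B ** A) n = gpow (A ** B) n ** A.
Proof.
elim: n => [|n IH] /=; first by rewrite gmul1r gmul1.
by rewrite -!gmulA IH !gmulA.
Qed.

Lemma gpowzS x (z : int) : gpowz x (z + 1)%R = gpowz x z ** x.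
Proof.
case: z => [n|[|n]].
- have -> : (Posz n + 1)%R = Posz n.+1 by lia.
  by rewrite /= -gpowSr.
- have -> : (Negz 0 + 1)%R = Posz 0 by lia.
  by rewrite /= gmul1r gmulV.
- have -> : (Negz n.+1 + 1)%R = Negz n by lia.
  by change (gpow (inv x) n.+1 = gpow (inv x) n.+2 ** x); rewrite [gpow _ n.+2]gpowSr gmulKVr.
Qed.
Lemma gpowzDn x (z : int) a : gpowz x (z + a%:Z)%R = gpowz x z ** gpow x a.
Proof.
elim: a => [|a IH]; first by rewrite addr0 gmul1r.
have -> : (z + a.+1%:Z = (z + a%:Z) + 1)%R by lia.
by rewrite gpowzS IH gpowSr gmulA.
Qed.

Definition prodl (s : seq G) := foldr (@gmul G) one s.
Lemma prodl_cat s1 s2 : prodl (s1 ++ s2) = prodl s1 ** prodl s2.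
Proof. elim: s1 => [|a s IH] /=; first by rewrite gmul1. by rewrite IH gmulA. Qed.
Lemma prodl_rcons s x : prodl (rcons s x) = prodl s ** x.
Proof. by rewrite -cats1 prodl_cat /= gmul1r. Qed.
Lemma prodl_nseq n x : prodl (nseq n x) = gpow x n.
Proof. by elim: n => //= n ->. Qed.

Lemma eval_word_rcons (A : Type) (v : A -> G) w l :
  eval_word v (rcons w l) = eval_word v w ** letter_val v l.
Proof.
elim: w => [|a w IH] /=; first by rewrite gmul1r gmul1.
by rewrite IH gmulA.
Qed.
End GroupLemmas.
Section WithG.
Variable G : group.
Implicit Types x : G.
Local Notation "x ** y" := (@gmul G x y) (at level 40, left associativity).
Local Notation one := (@gone G).
Local Notation inv := (@ginv G).
Variable g : G.
Hypothesis Hc : forall x : G, g ** x = x ** g.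
Hypothesis Hg : forall n : nat, (0 < n)%N -> gpow g n <> one.

Lemma cg a x : gpow g a ** x = x ** gpow g a.
Proof. exact: (gpow_comm a (Hc x)). Qed.
Lemma cgV x : inv g ** x = x ** inv g.
Proof. exact: (inv_comm (Hc x)). Qed.

Lemma gpow_g_inj a b : gpow g a = gpow g b -> a = b.
Proof.
wlog lab : a b / (a <= b)%N.
  move=> W h; case: (leqP a b) => [/W|/ltnW/W]; [exact|]; by move=> W'; symmetry; apply: W'.
move=> h; case: (ltngtP a b) => // lt.
- exfalso; have e : b = (a + (b - a))%N by lia.
  move: h; rewrite e gpowD -{1}(gmul1r (gpow g a)) => /gmul_injl h.
  by apply: (Hg (n := (b - a)%N)); [lia|].
- lia.
Qed.

Definition inf x := forall n a b, (0 < n)%N -> gpow x n ** gpow g a <> gpow g b.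

Lemma hyp_to_inf x : (forall n : nat, (0 < n)%N -> forall m : int, gpow x n <> gpowz g m) -> inf x.
Proof.
move=> h n a b hn e; apply: (h n hn ((Posz b) - (Posz a))%R).
apply: (@gmul_injr _ (gpow g a)); rewrite e -gpowzDn.
by have -> : ((Posz b) - (Posz a) + (Posz a) = (Posz b))%R by lia.
Qed.

Lemma notinf x : ~ inf x -> exists n a b, (0 < n)%N /\ gpow x n ** gpow g a = gpow g b.
Proof.
move=> h; apply: NNPP => h'; apply: h => n a b hn e; apply: h'; by exists n, a, b.
Qed.

Definition cong x y := exists a b, x ** gpow g a = y ** gpow g b.

Lemma cong_mul x y x' y' : cong x y -> cong x' y' -> cong (x ** x') (y ** y').
Proof.
move=> [a [b e]] [a' [b' e']]; exists (a' + a)%N, (b' + b)%N.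
rewrite !gpowD -!gmulA (gmulA x') e' -(cg a) (gmulA x) e.
by rewrite -!gmulA (cg b) -!gmulA.
Qed.

Lemma cong_pow x y a b n : x ** gpow g a = y ** gpow g b ->
  gpow x n ** gpow g (a * n) = gpow y n ** gpow g (b * n).
Proof.
move=> e; rewrite !gpowM -!gpowMc; first by rewrite e.
- by rewrite /gcomm cg.
- by rewrite /gcomm cg.
Qed.

Definition pos (S : seq G) (z : seq G) := forall i, (i < size z)%N -> List.In (nth g z i) S.

Lemma word_cong (S : seq G) (w : seq (G * bool)) :
  (forall l, List.In l w -> List.In l.1 S) ->
  (forall u, pos S u -> ~ inf (prodl u)) ->
  exists u, pos S u /\ cong (eval_word id w) (prodl u).
Proof.
move=> hw hall; elim: w hw => [|[s b] w IH] hw.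
  by exists [::]; split => //; exists 0%N, 0%N.
have [|u [pu cu]] := IH; first by move=> l hl; apply: hw; right.
have sS : List.In s S by apply: (hw (s, b)); left.
case: b {hw}.
- have ps : pos S [:: s] by case.
  have [[|n] [c [d [hn e]]]] := notinf (hall _ ps); first by [].
  move: e; rewrite /= gmul1r => e.
  exists (nseq n s ++ u); split.
    move=> i; rewrite nth_cat size_nseq size_cat size_nseq => hi.
    case: ifP => hi'; first by rewrite nth_nseq hi'.
    by apply: pu; lia.
  rewrite prodl_cat prodl_nseq; apply: cong_mul => //.
  exists d, c; rewrite /letter_val /= -e.
  by rewrite -!gmulA gmulKl.
- exists (s :: u); split.
    by move=> [|i] //= hi; apply: pu.
  by apply: cong_mul => //; exists 0%N, 0%N.
Qed.

Lemma exists_inf_pos (S : seq G) : generates S ->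
  (exists x : G, forall n : nat, (0 < n)%N -> forall m : int, gpow x n <> gpowz g m) ->
  exists z, pos S z /\ inf (prodl z).
Proof.
move=> gen [x hx]; apply: NNPP => hno.
have hall : forall u, pos S u -> ~ inf (prodl u) by move=> u pu iu; apply: hno; exists u.
have [w [hw ew]] := gen x.
have [u [pu [a [b cu]]]] := word_cong hw hall.
have [n [c [d [hn e]]]] := notinf (hall _ pu).
have := cong_pow n cu; rewrite ew => e2.
apply: (hyp_to_inf hx (a := (a * n + c)%N) (b := (d + b * n)%N) hn).
by rewrite gpowD gmulA e2 -gmulA -gpowD (addnC (b * n)) gpowD gmulA e gpowD.
Qed.

Lemma exists_min (S : seq G) : (exists z, pos S z /\ inf (prodl z)) ->
  exists y, [/\ pos S y, inf (prodl y) &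
    forall z, pos S z -> (size z < size y)%N -> ~ inf (prodl z)].
Proof.
move=> [z0 [p0 i0]].
suff : forall N, (exists z, [/\ pos S z, inf (prodl z) & (size z <= N)%N]) ->
  exists y, [/\ pos S y, inf (prodl y) &
    forall z, pos S z -> (size z < size y)%N -> ~ inf (prodl z)].
  by apply; exists z0; split.
elim => [|N IH] [z [pz iz sz]].
  by exists z; split => // z' _; rewrite ltnNge (leq_trans sz).
case: (classic (exists z, [/\ pos S z, inf (prodl z) & (size z <= N)%N])) => [/IH //|hno].
exists z; split => // z' pz' sz' iz'; apply: hno; exists z'; split => //; lia.
Qed.

Lemma gz_nat (n : int) : exists a b : nat, gpowz g n ** gpow g a = gpow g b /\ n = ((Posz b) - (Posz a))%R.
Proof.
case: n => [n|n].
- by exists 0%N, n; split; [rewrite gmul1r | lia].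
- exists n.+1, 0%N; split; last by rewrite NegzE; lia.
  exact: gpowVK.
Qed.

Section Construction.
Variable S : seq G.
Variable y : seq G.
Hypothesis Hpos : pos S y.
Hypothesis Hinf : inf (prodl y).
Hypothesis Hmin : forall z, pos S z -> (size z < size y)%N -> ~ inf (prodl z).
Local Notation k := (size y).

Lemma kpos : (0 < k)%N.
Proof.
move: Hinf; case: y => [|? ?] //= h; exfalso; apply: (h 1%N 0%N 0%N) => //=.
by rewrite !gmul1.
Qed.

Lemma modk (m : int) : exists r : nat, (m %% k)%Z = (Posz r) /\ (r < k)%N.
Proof.
have h0 : (0 <= (m %% k)%Z)%R by apply: modz_ge0; have := kpos; lia.
have h1 : ((m %% k)%Z < (Posz k))%R by apply: ltz_pmod; have := kpos; lia.
move: h0 h1; case: (m %% k)%Z => // r _ h1; exists r; split => //; lia.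
Qed.

Lemma r_lt (m : int) : (absz (m %% k)%Z < k)%N.
Proof. by have [r [-> h]] := modk m. Qed.

Definition letter (m : int) : G := nth g y (absz (m %% k)%Z).
Fixpoint Pn (n : nat) : G := if n is j.+1 then Pn j ** letter j else one.
Fixpoint Nn (n : nat) : G := if n is j.+1 then Nn j ** inv (letter (- Posz j.+1)%R) else one.
Definition P (m : int) : G := match m with Posz n => Pn n | Negz n => Nn n.+1 end.

Lemma letter_nat (q : nat) : (q < k)%N -> letter q = nth g y q.
Proof. by move=> h; rewrite /letter modz_nat /= modn_small. Qed.

Lemma P_step m : P (m + 1)%R = P m ** letter m.
Proof.
case: m => [n|[|n]].
- by have -> : (Posz n + 1)%R = Posz n.+1 by lia.
- have -> : (Negz 0 + 1)%R = Posz 0 by lia.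
  by rewrite /= NegzE gmul1 gmulV.
- have -> : (Negz n.+1 + 1)%R = Negz n by lia.
  by rewrite /= NegzE gmulKVr.
Qed.

Definition W (m : int) (L : nat) := prodl (mkseq (fun i => letter (m + (Posz i))%R) L).
Lemma P_path m L : P (m + (Posz L))%R = P m ** W m L.
Proof.
elim: L => [|L IH]; first by rewrite addr0 /W /= gmul1r.
rewrite /W mkseqS prodl_rcons -/(W m L) gmulA -IH.
have -> : (m + (Posz L.+1) = (m + (Posz L)) + 1)%R by lia.
by rewrite P_step.
Qed.

Lemma nth_rotl r j : (r < k)%N -> (j < k)%N ->
  nth g (drop r y ++ take r y) j = nth g y ((r + j) %% k).
Proof.
move=> hr hj; rewrite nth_cat size_drop.
case: ltnP => h.
- by rewrite nth_drop modn_small //; lia.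
- rewrite nth_take; last by lia.
  have -> : (r + j = k + (j - (k - r)))%N by lia.
  by rewrite modnDl modn_small //; lia.
Qed.

Lemma letter_shift m i : letter (m + (Posz i))%R = nth g y ((absz (m %% k)%Z + i) %% k).
Proof.
have [r [hr _]] := modk m.
by rewrite /letter -modzDml hr -PoszD modz_nat /=.
Qed.

Definition C (z : seq G) L := prodl (mkseq (fun i => nth g z (i %% k)) L).

Lemma mkseq_add (T : Type) (f : nat -> T) a b :
  mkseq f (a + b) = mkseq f a ++ mkseq (fun i => f (a + i)%N) b.
Proof. by rewrite /mkseq iotaD map_cat add0n -{2}(addn0 a) iotaDl -map_comp. Qed.

Lemma C_k z : size z = k -> mkseq (fun i => nth g z (i %% k)) k = z.
Proof.
move=> hz; transitivity (mkseq (nth g z) (size z)); last exact: mkseq_nth. rewrite hz.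
apply/eq_in_map => i; rewrite mem_iota => /andP [_ hi]; rewrite modn_small //.
Qed.

Lemma C_addk z L : size z = k -> C z (k + L) = prodl z ** C z L.
Proof.
move=> hz; rewrite /C mkseq_add prodl_cat C_k //.
congr (gmul _ (prodl _)); apply: eq_mkseq => i; by rewrite modnDl.
Qed.

Lemma C_qt z q t : size z = k -> C z (q * k + t) = gpow (prodl z) q ** C z t.
Proof.
move=> hz; elim: q => [|q IH]; first by rewrite mul0n add0n gmul1.
by rewrite mulSn -addnA C_addk // IH gmulA.
Qed.

Lemma C_take z t : size z = k -> (t <= k)%N -> C z t = prodl (take t z).
Proof.
move=> hz ht; congr prodl; apply: (@eq_from_nth _ g).
  by rewrite size_mkseq size_takel // hz.
move=> i; rewrite size_mkseq => hi; rewrite nth_mkseq // nth_take // modn_small //; lia.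
Qed.

Lemma W_C m L : W m L = C (drop (absz (m %% k)%Z) y ++ take (absz (m %% k)%Z) y) L.
Proof.
rewrite /W /C; congr prodl; apply: eq_mkseq => i.
rewrite letter_shift nth_rotl ?r_lt ?ltn_mod ?kpos //.
by rewrite modnDmr.
Qed.

Lemma rot_inf r : inf (prodl (drop r y ++ take r y)).
Proof.
move=> n a b hn; rewrite prodl_cat => e.
apply: (Hinf (a := a) (b := b) hn).
rewrite -(cat_take_drop r y) prodl_cat.
apply: (@gmul_injr _ (prodl (take r y))).
rewrite -gmulA (cg a) gmulA -gpow_conj -gmulA e.
by rewrite (cg b).
Qed.

Lemma W_not1 m L a b : (0 < L)%N -> W m L ** gpow g a = gpow g b -> False.
Proof.
move=> hL; rewrite W_C.
have hr : (absz (m %% k)%Z < k)%N := r_lt m.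
move: hr; set r := absz _ => hr.
set z := drop r y ++ take r y.
have sz : size z = k by rewrite size_cat size_drop size_takel; lia.
have pz : pos S z.
  move=> j hj; rewrite nth_rotl //; last by rewrite -sz.
  by apply: Hpos; rewrite ltn_mod kpos.
have iz : inf (prodl z) := @rot_inf r.
have hLe := divn_eq L k.
rewrite hLe C_qt // C_take //; last by rewrite ltnW // ltn_mod kpos.
move: hLe; set q := L %/ k; set t := L %% k => hLe e.
case: (posnP t) => [t0|tpos].
- move: e; rewrite t0 take0 /= gmul1r; apply: iz.
  move: hL; rewrite hLe t0 addn0 muln_gt0 => /andP [] //.
- have htk : (t < k)%N by rewrite ltn_mod kpos.
  apply: (Hmin (z := drop t z)).
  + move=> j hj; rewrite nth_drop; apply: pz; rewrite size_drop sz in hj; lia.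
  + rewrite size_drop sz; lia.
  move=> n c d hn e2.
  have hZ : prodl z = prodl (take t z) ** prodl (drop t z).
    by rewrite -prodl_cat cat_take_drop.
  have key : gpow (prodl z) q.+1 ** gpow g a = prodl (drop t z) ** gpow g b.
    rewrite -(cg b) -e gpowSr {2}hZ -!gmulA -(cg a).
    done.
  have cp := cong_pow n key.
  apply: (iz (q.+1 * n) (a * n + c) (d + b * n)); first by rewrite muln_gt0 hn.
  by rewrite gpowM gpowD gmulA cp -gmulA -gpowD (addnC (b * n)) gpowD gmulA e2 gpowD.
Qed.

Lemma P_lt m m' a b : (m < m')%R -> P m ** gpow g a = P m' ** gpow g b -> False.
Proof.
move=> lt e.
have [L [hL hm']] : exists L : nat, (0 < L)%N /\ m' = (m + Posz L)%R.
  by exists (absz (m' - m)); split; lia.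
move: e; rewrite hm' P_path -gmulA => /gmul_injl e.
exact: (W_not1 hL (esym e)).
Qed.

Lemma P_inj m m' a b : P m ** gpow g a = P m' ** gpow g b -> m = m'.
Proof.
move=> e; case: (ltgtP m m') => // lt; exfalso.
- exact: P_lt lt e.
- exact: P_lt lt (esym e).
Qed.

Lemma letter_ne_g (q : nat) : (q < k)%N -> nth g y q <> g.
Proof.
move=> hq e; have := P_step (Posz q); rewrite letter_nat // e => h.
have : (Posz q + 1)%R = Posz q.
  by apply: (@P_inj _ _ 0%N 1%N); rewrite h /= !gmul1r.
lia.
Qed.

Definition sn (i : nat) : nat := if (i.+1 < k)%N then i.+1 else 0%N.
Lemma sn_lt i : (sn i < k)%N.
Proof. by rewrite /sn; case: ifP => // _; rewrite kpos. Qed.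
Lemma sn_mod m : sn (absz (m %% k)%Z) = absz ((m + 1) %% k)%Z.
Proof.
have [r [hr hrk]] := modk m.
rewrite -modzDml hr -PoszD modz_nat /= /sn addn1.
case: ltnP => h; first by rewrite modn_small.
have -> : r.+1 = k by lia.
by rewrite modnn.
Qed.
Lemma sn_inj a b : (a < k)%N -> (b < k)%N -> sn a = sn b -> a = b.
Proof. by rewrite /sn => ha hb; case: ltnP => h1; case: ltnP => h2; lia. Qed.

Definition q0 : 'I_k := Ordinal kpos.
Definition dlt (q : 'I_k) (s : bool) : 'I_k := if s then q else Ordinal (sn_lt q).
Definition eta (q : 'I_k) (s : bool) : G := if s then g else nth g y q.
Definition phi (v : Z2) : G := gpowz g v.2 ** P v.1.

Lemma dinv_eq q s q' : dlt q' s = q -> (forall q'', dlt q'' s = q -> q'' = q') ->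
  delta_inv dlt q s = q'.
Proof.
move=> h u; rewrite /delta_inv; case: pickP => [x /eqP hx | hn] /=; first exact: u.
by move: (hn q'); rewrite h eqxx.
Qed.

Lemma invariant w :
  nat_of_ord (foldl (tstep dlt eta) (q0, [::]) w).1 = absz ((eval_word Z2gen w).1 %% k)%Z /\
  eval_word id (foldl (tstep dlt eta) (q0, [::]) w).2 = phi (eval_word Z2gen w).
Proof.
elim/last_ind: w => [|w l IH].
  by split; [rewrite /= mod0z | rewrite /phi /= gmul1].
rewrite foldl_rcons eval_word_rcons.
move: IH; case: (foldl _ _ w) => q out; case: (eval_word Z2gen w) => m n /= [hq ho].
case: l => [[] []] /=.
- rewrite (@dinv_eq q true q); [|done|by move=> q'' /= ->].
  rewrite subr0; split => //.
  rewrite eval_word_rcons ho /phi /letter_val /= subr0.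
  have hG : gpowz g n = gpowz g (n - 1)%R ** g by rewrite -gpowzS; congr gpowz; lia.
  by rewrite hG -(gmulA _ g) Hc gmulA gmulKr.
- rewrite addr0; split => //.
  by rewrite eval_word_rcons ho /phi /letter_val /= addr0 gpowzS -!gmulA Hc.
- have [r [hr hrk]] := modk (m - 1).
  have e1 : (m - 1 + 1)%R = m by lia.
  have hd : dlt (Ordinal hrk) false = q.
    by apply: val_inj => /=; rewrite hq -{1}e1 -sn_mod hr.
  rewrite (dinv_eq hd); last first.
    move=> q'' h; apply: val_inj; apply: sn_inj => //=.
    have h1 : sn q'' = q := congr1 val h.
    have h2 : sn r = q := congr1 val hd.
    by rewrite h1 h2.
  split; first by rewrite hr.
  rewrite eval_word_rcons ho /phi /letter_val /= subr0.
  have hP : P m = P (m - 1) ** nth g y r by rewrite -{1}e1 P_step /letter hr.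
  by rewrite hP gmulA gmulKr.
- rewrite hq sn_mod; split => //.
  by rewrite eval_word_rcons ho /phi /letter_val /= addr0 P_step gmulA.
Qed.

Lemma H1 (n : int) a b x c : gpowz g n ** gpow g a = gpow g b ->
  (gpowz g n ** x) ** (gpow g a ** gpow g c) = x ** gpow g (b + c).
Proof.
move=> e; rewrite gmulA -(gmulA _ x) -(cg a) gmulA e (cg b) -gmulA -gpowD //.
Qed.

Lemma phi_inj (v v' : Z2) : phi v = phi v' -> v = v'.
Proof.
case: v => m n; case: v' => m' n'; rewrite /phi /= => e.
have [a [b [ea hn]]] := gz_nat n.
have [a' [b' [ea' hn']]] := gz_nat n'.
have := congr1 (fun t => t ** (gpow g a ** gpow g a')) e => /=.
rewrite (H1 _ _ ea) -!gpowD (addnC a) (gpowD _ a') (H1 _ _ ea') => e2.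
have hm := P_inj e2; subst m'.
move/gmul_injl/gpow_g_inj: e2 => e3.
congr pair; lia.
Qed.

Lemma main_construct : exists phi : Z2 -> G, snake_embedding Z2gen (g :: S) phi.
Proof.
exists phi; exists ('I_k : finType); exists q0, dlt, eta; split.
- move=> q [] /=; [by left | right; apply: Hpos; exact: ltn_ord].
- move=> q s1 s2; case: s1; case: s2 => //= h; exfalso.
  + exact: (letter_ne_g (ltn_ord q) (esym h)).
  + exact: (letter_ne_g (ltn_ord q) h).
- move=> q [].
  + by exists q; split => // q'' /= ->.
  + have hq' : ((if nat_of_ord q == 0%N then k.-1 else (nat_of_ord q).-1) < k)%N.
      by have := ltn_ord q; have := kpos; case: eqP => _; lia.
    exists (Ordinal hq'); split.
      apply: val_inj => /=; rewrite /sn; have := ltn_ord q; have := kpos.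
      move=> kp qk; case: eqP => h; case: ltnP => h2; lia.
    move=> q'' h; apply: val_inj; apply: sn_inj => //=.
    have h1 : sn q'' = q := congr1 val h.
    rewrite h1 /sn; have := ltn_ord q; have := kpos.
    move=> kp qk; case: eqP => h'; case: ltnP => h2; lia.
- by move=> w; rewrite /f_M; case: (invariant w) => _ ->.
- move=> w w'; rewrite /f_M; case: (invariant w) => _ ->; case: (invariant w') => _ ->.
  by split => [/phi_inj|->].
Qed.

End Construction.

End WithG.

Theorem lemma2 (G : group) (S : seq G) (g : G) :
  generates S ->
  (forall x : G, @gmul G g x = @gmul G x g) ->
  (forall n : nat, (0 < n)%N -> gpow g n <> @gone G) ->
  (exists x : G, forall n : nat, (0 < n)%N -> forall m : int, gpow x n <> gpowz g m) ->
  exists phi : Z2 -> G, snake_embedding Z2gen (g :: S) phi.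
Proof.
move=> gen Hc Hg hx.
have [y [Hpos Hinf Hmin]] := exists_min (exists_inf_pos Hc gen hx).
exact: (main_construct Hc Hg Hpos Hinf Hmin).
Qed.
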